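(* Let $P$ be any multiprogram in which each process is a single-threaded program accessing read/write variables from a set $V$, and let $K=\{V_1,\dots,V_m\}$ be any partition of a subset of $V$. Let $L(K)=\{1,\dots,m\}$. Then each of the two transformations $\mathrm{SWFR}$ and $\mathrm{FWSR}$ (described in the context) correctly implements the partition consistency model $\mathrm{PC}(K)$ on the partial-order broadcast model $\mathrm{POB}(L(K))$; i.e., for every finite computation $\widehat C$ of the transformed multiprogram that satisfies $\mathrm{POB}(L(K))$ and in which every transformed operation has completed, the interpretation $C$ of $\widehat C$ satisfies $\mathrm{PC}(K)$.
   Context: Framework. A thread issues a sequence of operation invocations (its program order). A process is a finite collection of threads; a multiprogram is a finite collection of processes. A computation of a multiprogram is obtained by completing every invocation with an arbitrary response; it is thus one sequence of completed operations per thread. $O_C$ is the set of operations of computation $C$; $O_C|p$ is the set of operations of process $p$; $O_C|\mathrm{wrts}$ is the set of all write operations; $O_C|\mathrm{wrts}(S)$ is the set of writes to variables in $S$. Program order $\to_{\mathrm{prog}}$ is the union of the per-thread total orders. A memory consistency model is a predicate on computations. Validity: a sequence of reads/writes on a variable is valid if each read returns the value of the most recent preceding write to that variable in the sequence (or the initial value if none); a sequence of operations on several objects is valid if its restriction to each object is valid. For broadcast objects, a sequence of bcast/deliver operations is valid if no deliver precedes its corresponding bcast (the bcast need not appear in the sequence) and no particular deliver occurs more than once. For relations $R,T$ and a set $A$: $\mathrm{Extends}[A,R,T]$ means $\forall a_1,a_2\in A: a_1 T a_2 \Rightarrow a_1 R a_2$; $\mathrm{Agree}[A,R,T]$ means $\forall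 a_1,a_2\in A: a_1 R a_2 \Leftrightarrow a_1 T a_2$. Partition consistency: for a partition $K=\{V_1,\dots,V_m\}$ of a subset of the shared variables, $\mathrm{PC}(K)(C)$ holds iff there exist, for every process $p$, a valid total order $\to_{L_p}$ on $O_C|p\cup O_C|\mathrm{wrts}$ such that for all $p$, $\mathrm{Extends}[O_C|p\cup O_C|\mathrm{wrts},\to_{L_p},\to_{\mathrm{prog}}]$, and for all $p,q$ and $i\in[1,m]$, $\mathrm{Agree}[O_C|\mathrm{wrts}(V_i),\to_{L_p},\to_{L_q}]$. Partial-order broadcast model: processes are multithreaded; threads of the same process share local variables; distinct processes communicate via unique update objects with operations $\mathrm{bcast}(u,l)$ (broadcast update $u$ with label $l\in L\cup\{\bot\}$, $\bot$ meaning unlabeled) and $\mathrm{deliver}$ returning some $(u,l)$. Define $x\to_{\mathrm{delOrder}} y$ iff $x=\mathrm{deliver}(u_1,l_1)$, $y=\mathrm{deliver}(u_2,l_2)$ and $\mathrm{bcast}(u_1,l_1)\to_{\mathrm{prog}}\mathrm{bcast}(u_2,l_2)$. $O_C|\mathrm{delivers}(l)$ is the set of delivers returning an update with label $l\neq\bot$. $\mathrm{POB}(L)(C)$ holds iff there exist, for each process $p$, a valid total order $\to_{L_p}$ on $O_C|p$ with $\mathrm{Extends}[O_C|p,\to_{L_p},\to_{\mathrm{prog}_p}\cup\to_{\mathrm{delOrder}}]$ for all $p$, $\mathrm{Agree}[O_C|\mathrm{delivers}(l),\to_{L_p},\to_{L_q}]$ for all $p,q$ and $l\in L$, and for every $p$: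 $\mathrm{bcast}(m,l)\in O_C$ iff $\mathrm{deliver}(m,l)\in O_C|p$. Correct implementation: a transformation $\tau$ maps a multiprogram $P$ to a target multiprogram $\tau(P)$, replacing each specified operation invocation by a target subroutine that returns a response (and possibly adding new threads). A computation $\widehat C$ of $\tau(P)$ is interpreted as the computation $C$ of $P$ in which each specified operation receives the response returned by its subroutine. $\tau$ correctly implements model $MC$ on target model $\widehat{MC}$ if, for every admissible $P$, the interpretation of every (finite, with all subroutines completed) computation of $\tau(P)$ satisfying $\widehat{MC}$ satisfies $MC$. The transformations. Each specified process $p$ becomes a target process $\widehat p$ with a main thread $\widehat p.m$ and a delivery thread $\widehat p.d$, sharing local variables: a replica $\mathrm{Memory}[\widehat p].x$ for each $x\in V$ (initially the initial value of $x$), and counters writes-requested and writes-processed (initially 0). In $\widehat p.m$: a read of $x$ returns $\mathrm{Memory}[\widehat p].x$; a write $\mathrm{write}(x,v)$ increments writes-requested, then performs $\mathrm{bcast}([x,v,\widehat p],i)$ if $x\in V_i$ for some $V_i\in K$, and $\mathrm{bcast}([x,v,\widehat p],\bot)$ otherwise. The procedure WaitWritesComplete busy-waits while writes-processed $<$ writes-requested. In SWFR, WaitWritesComplete is called at the end of every write; in FWSR it is instead called at the beginning of every read. The thread $\widehat p.d$ loops forever: perform a deliver returning $([x,v,\mathit{source}],l)$, set $\mathrm{Memory}[\widehat p].x\gets v$, and if $\mathit{source}=\widehat p$ increment writes-processed. *)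

(* Defs.v *)
From mathcomp Require Import all_boot.
Set Implicit Arguments. Unset Strict Implicit. Unset Printing Implicit Defensive.

Fixpoint get (A : Type) (s : seq A) (i : nat) : option A :=
  match s, i with
  | [::], _ => None
  | a :: _, 0 => Some a
  | _ :: s', i'.+1 => get s' i'
  end.

(* A duplicate-free list [s] enumerating exactly the (finite) set [D];
   it represents a total order on [D]. *)
Definition enumerates (Id : Type) (D : Id -> Prop) (s : seq Id) : Prop :=
  (forall i j a, get s i = Some a -> get s j = Some a -> i = j) /\
  (forall a, D a <-> exists i, get s i = Some a).

Definition before (Id : Type) (s : seq Id) (a b : Id) : Prop :=
  exists i j, (i < j)%N /\ get s i = Some a /\ get s j = Some b.

Definition valid_rw (Id Loc Val : Type)
    (isW isR : Id -> Loc -> Val -> Prop) (init : Loc -> Val) (s : seq Id) : Prop :=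
  forall k r l v, get s k = Some r -> isR r l v ->
    (exists j w, (j < k)%N /\ get s j = Some w /\ isW w l v /\
       (forall j' w' v', (j < j')%N -> (j' < k)%N -> get s j' = Some w' -> ~ isW w' l v'))
    \/ ((forall j w v', (j < k)%N -> get s j = Some w -> ~ isW w l v') /\ v = init l).

Section Spec.
Variables (Var Val : Type) (Proc : finType).

Inductive SInv := SRead of Var | SWrite of Var & Val.
Inductive SOp := SRd of Var & Val | SWr of Var & Val.

(* operation occurrence: (process, position in its thread) *)
Definition SId := (Proc * nat)%type.

Variable sc : Proc -> seq SOp.   (* a computation of the specified multiprogram *)

Definition slook (a : SId) : option SOp := get (sc a.1) a.2.
Definition inOs (p : Proc) (a : SId) : Prop := a.1 = p /\ exists o, slook a = Some o.
Definition isWrite (a : SId) : Prop := exists x v, slook a = Some (SWr x v).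
Definition progS (a b : SId) : Prop := a.1 = b.1 /\ (a.2 < b.2)%N.

Definition svalid (init : Var -> Val) (s : seq SId) : Prop :=
  valid_rw (fun a x v => slook a = Some (SWr x v))
           (fun a x v => slook a = Some (SRd x v)) init s.

(* Partition consistency PC(K); the partition K = {V_1..V_m} of a subset
   of the variables is given by blk : x |-> Some i iff x \in V_i. *)
Definition PC (m : nat) (blk : Var -> option 'I_m) (init : Var -> Val) : Prop :=
  exists S : Proc -> seq SId,
    (forall p,
       enumerates (fun a => inOs p a \/ isWrite a) (S p) /\
       svalid init (S p) /\
       (forall a b, (inOs p a \/ isWrite a) -> (inOs p b \/ isWrite b) ->
                    progS a b -> before (S p) a b)) /\
    (forall (i : 'I_m) p q w1 w2,
       (exists x v, slook w1 = Some (SWr x v) /\ blk x = Some i) ->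
       (exists x v, slook w2 = Some (SWr x v) /\ blk x = Some i) ->
       (before (S p) w1 w2 <-> before (S q) w1 w2)).
End Spec.

Inductive Thr := Main | Deliv.
Inductive Ctr := WR (* writes-requested *) | WP (* writes-processed *).
Inductive Variant := SWFR | FWSR.

Section Target.
Variables (Var Val : Type) (Proc : finType) (m : nat).

(* operation occurrence: (process, thread, position in the thread) *)
Definition TId := (Proc * Thr * nat)%type.

(* Local variables: Memory[p].x and the two
   counters.  An update object broadcast by the bcast occurrence b carrying
   [x,v,src] with label lab is delivered as  TDeliver b x v src lab
   (the occurrence b makes update objects unique). *)
Inductive TOp :=
| TRdM of Var & Val | TWrM of Var & Val
| TRdC of Ctr & nat | TWrC of Ctr & nat
| TBcast of Var & Val & Proc & option 'I_m
| TDeliver of TId & Var & Val & Proc & option 'I_m.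

(* WaitWritesComplete: while writes-processed < writes-requested do skip *)
Inductive Wait : seq TOp -> Prop :=
| WaitExit a b : (b <= a)%N -> Wait [:: TRdC WP a; TRdC WR b]
| WaitLoop a b rest : (a < b)%N -> Wait rest ->
    Wait [:: TRdC WP a, TRdC WR b & rest].

(* the target subroutine for one specified invocation, in process p,
   together with the interpreted (completed) specified operation *)
Inductive Subroutine (tau : Variant) (blk : Var -> option 'I_m) (p : Proc) :
    SInv Var Val -> seq TOp -> SOp Var Val -> Prop :=
| SubRead_SWFR x v : tau = SWFR ->
    Subroutine tau blk p (SRead Val x) [:: TRdM x v] (SRd x v)
| SubWrite_SWFR x v n w : tau = SWFR -> Wait w ->
    Subroutine tau blk p (SWrite x v)
        ([:: TRdC WR n; TWrC WR n.+1; TBcast x v p (blk x)] ++ w) (SWr x v)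
| SubRead_FWSR x v w : tau = FWSR -> Wait w ->
    Subroutine tau blk p (SRead Val x) (w ++ [:: TRdM x v]) (SRd x v)
| SubWrite_FWSR x v n : tau = FWSR ->
    Subroutine tau blk p (SWrite x v)
        [:: TRdC WR n; TWrC WR n.+1; TBcast x v p (blk x)] (SWr x v).

(* the main thread runs the whole program, every subroutine completed *)
Inductive MainRun (sub : SInv Var Val -> seq TOp -> SOp Var Val -> Prop) :
    seq (SInv Var Val) -> seq TOp -> seq (SOp Var Val) -> Prop :=
| MR_nil : MainRun sub [::] [::] [::]
| MR_cons i ops o iss ops' os : sub i ops o -> MainRun sub iss ops' os ->
    MainRun sub (i :: iss) (ops ++ ops') (o :: os).

Inductive DelivIter (p : Proc) : seq TOp -> Prop :=
| DI_own b x v lab n :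
    DelivIter p [:: TDeliver b x v p lab; TWrM x v; TRdC WP n; TWrC WP n.+1]
| DI_other b x v src lab : src <> p ->
    DelivIter p [:: TDeliver b x v src lab; TWrM x v].

(* a finite prefix of the infinite delivery loop *)
Inductive DelivRun (p : Proc) : seq TOp -> Prop :=
| DR_nil : DelivRun p [::]
| DR_stop pre rest : DelivIter p (pre ++ rest) -> DelivRun p pre
| DR_iter it ops : DelivIter p it -> DelivRun p ops -> DelivRun p (it ++ ops).

Variable tc : Proc -> Thr -> seq TOp.   (* a computation of the target *)

Definition tlook (a : TId) : option TOp := get (tc a.1.1 a.1.2) a.2.
Definition inO (p : Proc) (a : TId) : Prop := a.1.1 = p /\ exists o, tlook a = Some o.
Definition progT (a b : TId) : Prop := a.1 = b.1 /\ (a.2 < b.2)%N.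

Definition delOrder (a b : TId) : Prop :=
  exists b1 x1 v1 s1 l1 b2 x2 v2 s2 l2,
    tlook a = Some (TDeliver b1 x1 v1 s1 l1) /\
    tlook b = Some (TDeliver b2 x2 v2 s2 l2) /\ progT b1 b2.

Definition tvalid (init : Var -> Val) (s : seq TId) : Prop :=
  valid_rw (fun a x v => tlook a = Some (TWrM x v))
           (fun a x v => tlook a = Some (TRdM x v)) init s /\
  valid_rw (fun a c n => tlook a = Some (TWrC c n))
           (fun a c n => tlook a = Some (TRdC c n)) (fun _ => 0%N) s /\
  (forall i j d b x v src lab, get s i = Some d ->
     tlook d = Some (TDeliver b x v src lab) -> get s j = Some b -> (j < i)%N) /\
  (forall i j d1 d2 b x v src lab, get s i = Some d1 -> get s j = Some d2 ->
     tlook d1 = Some (TDeliver b x v src lab) ->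
     tlook d2 = Some (TDeliver b x v src lab) -> i = j).

Definition delBefore (s : seq TId) (l : 'I_m) (b1 b2 : TId) : Prop :=
  exists d1 d2 x1 v1 s1 x2 v2 s2,
    tlook d1 = Some (TDeliver b1 x1 v1 s1 (Some l)) /\
    tlook d2 = Some (TDeliver b2 x2 v2 s2 (Some l)) /\ before s d1 d2.

(* POB(L) with L = 'I_m *)
Definition POB (init : Var -> Val) : Prop :=
  exists S : Proc -> seq TId,
    (forall p,
       enumerates (inO p) (S p) /\
       tvalid init (S p) /\
       (forall a b, inO p a -> inO p b -> (progT a b \/ delOrder a b) ->
                    before (S p) a b) /\
       (forall b x v src lab,
          tlook b = Some (TBcast x v src lab) <->
          exists d, inO p d /\ tlook d = Some (TDeliver b x v src lab))) /\
    (forall (l : 'I_m) p q b1 b2,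
       delBefore (S p) l b1 b2 <-> delBefore (S q) l b1 b2).
End Target.

(* Main.v *)
Require Import Defs.
From mathcomp Require Import all_boot zify.
From Stdlib Require Import ClassicalEpsilon.
Set Implicit Arguments. Unset Strict Implicit. Unset Printing Implicit Defensive.

Section GetLemmas.
Variable A : Type.
Implicit Types s : seq A.

Lemma get_some s i a : get s i = Some a -> i < size s.
Proof. by elim: s i => [|b s IH] [|i] //= /IH. Qed.

Lemma get_none s i : size s <= i -> get s i = None.
Proof. by elim: s i => [|b s IH] [|i] //= /IH. Qed.

Lemma get_none_inv s i : get s i = None -> size s <= i.
Proof. by elim: s i => [|b s IH] [|i] //= /IH. Qed.

Lemma get_exists s i : i < size s -> exists a, get s i = Some a.
Proof. by elim: s i => [|b s IH] [|i] //=; [exists b|move/IH]. Qed.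

Lemma get_catL s1 s2 i : i < size s1 -> get (s1 ++ s2) i = get s1 i.
Proof. by elim: s1 i => [|b s IH] [|i] //= /IH. Qed.

Lemma get_catR s1 s2 i : size s1 <= i -> get (s1 ++ s2) i = get s2 (i - size s1).
Proof. by elim: s1 i => [|b s IH] [|i] //= /IH. Qed.

Lemma get_nth s i x0 : i < size s -> get s i = Some (nth x0 s i).
Proof. by elim: s i => [|b s IH] [|i] //= /IH. Qed.

Lemma get_take s n i a : get (take n s) i = Some a -> get s i = Some a.
Proof. by elim: s n i => [|b s IH] [|n] [|i] //= /IH. Qed.

Lemma get_take2 s n i : i < n -> get (take n s) i = get s i.
Proof. elim: s n i => [|b s IH] [|n] [|i] //= H; exact: IH. Qed.
End GetLemmas.

Section GetEq.
Variable T : eqType.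
Implicit Types s : seq T.
Lemma get_mem s i a : get s i = Some a -> a \in s.
Proof.
elim: s i => [|b s IH] [|i] //=; first by move=> [->]; rewrite inE eqxx.
by move/IH => H; rewrite inE H orbT.
Qed.

Lemma mem_get s a : a \in s -> exists i, get s i = Some a.
Proof.
elim: s => [|b s IH] //=; rewrite inE => /orP [/eqP ->|/IH [i Hi]]; first by exists 0.
by exists i.+1.
Qed.

Lemma get_uniq s i j a : uniq s -> get s i = Some a -> get s j = Some a -> i = j.
Proof.
elim: s i j => [|b s IH] [|i] [|j] //= /andP [Hb Hu].
- by move=> [<-] /get_mem H; rewrite H in Hb.
- by move=> /get_mem H [Heq]; subst; rewrite H in Hb.
- by move=> H1 H2; rewrite (IH _ _ Hu H1 H2).
Qed.
End GetEq.

Lemma sort_key (T : eqType) (key : T -> nat) (s : seq T) : uniq s -> {in s &, injective key} ->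
  uniq (sort (fun a b => key a <= key b) s) /\
  (forall a, (a \in sort (fun a b => key a <= key b) s) = (a \in s)) /\
  (forall a b, a \in s -> b \in s ->
     (before (sort (fun a b => key a <= key b) s) a b <-> key a < key b)).
Proof.
move=> Hu Hinj.
set leT := (fun a b : T => key a <= key b).
set s' := sort leT s.
have Hu' : uniq s' by rewrite sort_uniq.
have Hm : forall a, (a \in s') = (a \in s) by move=> a; rewrite mem_sort.
have Hs : sorted leT s' by apply: sort_sorted => a b; apply: leq_total.
have Htr : transitive leT by move=> a b c; apply: leq_trans.
have Hrf : reflexive leT by move=> a; apply: leqnn.
split=> //; split=> // a b Ha Hb.
have Hle : forall i j x y, get s' i = Some x -> get s' j = Some y -> i <= j -> key x <= key y.
  move=> i j x y Hi Hj Hij; have Hi' := get_some Hi; have Hj' := get_some Hj.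
  rewrite (get_nth x) // in Hi; rewrite (get_nth x) // in Hj.
  case: Hi => <-; case: Hj => <-.
  by apply: (sorted_leq_nth Htr Hrf x Hs).
split.
- move=> [i [j [Hij [Hi Hj]]]].
  rewrite ltn_neqAle (Hle _ _ _ _ Hi Hj (ltnW Hij)) andbT.
  apply/eqP => E; have Eab := Hinj _ _ Ha Hb E; subst b.
  by have := get_uniq Hu' Hi Hj => Eij; rewrite Eij ltnn in Hij.
- move=> Hk; rewrite -Hm in Ha; rewrite -Hm in Hb.
  have [i Hi] := mem_get Ha; have [j Hj] := mem_get Hb.
  exists i, j; split=> //; rewrite ltnNge; apply/negP => Hji.
  by have := Hle _ _ _ _ Hj Hi Hji; rewrite leqNgt Hk.
Qed.

Section Cnt.
Variable P : pred nat.
Lemma cnt_S j : count P (iota 0 j.+1) = count P (iota 0 j) + P j.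
Proof. by rewrite -addn1 iotaD count_cat /= addn0. Qed.
Lemma cnt_split i j : i <= j -> count P (iota 0 j) = count P (iota 0 i) + count P (iota i (j - i)).
Proof. by move=> H; rewrite -{1}(subnKC H) iotaD count_cat. Qed.
Lemma cnt_mono i j : i <= j -> count P (iota 0 i) <= count P (iota 0 j).
Proof. by move=> H; rewrite (cnt_split H) leq_addr. Qed.
Lemma count_le1 (s : seq nat) c : (forall i, i \in s -> P i -> i = c) -> uniq s -> count P s <= 1.
Proof.
move=> H Hu; rewrite -size_filter.
have : {subset filter P s <= [:: c]}.
  by move=> i; rewrite mem_filter => /andP [Hp Hi]; rewrite inE (H i Hi Hp).
by move/(uniq_leq_size (filter_uniq P Hu)).
Qed.
Lemma count_0 (s : seq nat) : (forall i, i \in s -> ~~ P i) -> count P s = 0.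
Proof.
move=> H; have : ~~ has P s by apply/hasPn.
by rewrite has_count -leqNgt leqn0 => /eqP.
Qed.
End Cnt.

Lemma posE (T : eqType) (s : seq T) i j a b : uniq s -> get s i = Some a -> get s j = Some b ->
  (before s a b <-> i < j).
Proof.
move=> Hu Ha Hb; split.
- move=> [i' [j' [H [Ha' Hb']]]].
  by rewrite (get_uniq Hu Ha Ha') (get_uniq Hu Hb Hb').
- by move=> H; exists i, j.
Qed.


Section MainStruct.
Variables (Var Val : Type) (Proc : finType) (m : nat).
Variables (blk : Var -> option 'I_m) (tau : Variant) (p : Proc).
Notation TOp := (TOp Var Val Proc m).
Notation SOp := (SOp Var Val).
Notation RdC := (@TRdC Var Val Proc m).
Notation WrC := (@TWrC Var Val Proc m).
Notation RdM := (@TRdM Var Val Proc m).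
Notation WrM := (@TWrM Var Val Proc m).

Lemma wait_rdc (w : seq TOp) : Wait w -> forall j o, get w j = Some o -> exists (c : Ctr) (n : nat), o = RdC c n.
Proof.
elim=> [a b _|a b rest _ _ IH] [|[|j]] o //=; try (by move=> [<-]; eauto).
by move/IH.
Qed.

Lemma wait_exit (w : seq TOp) : Wait w -> exists a b, b <= a /\ 1 < size w /\
  get w (size w).-2 = Some (RdC WP a) /\ get w (size w).-1 = Some (RdC WR b).
Proof.
elim=> [a b Hab|a b rest _ _ [a' [b' [H1 [H2 [H3 H4]]]]]]; first by exists a, b; repeat split.
exists a', b'; split=> //; split; first by [].
by move: H2 H3 H4; case: rest => [|x [|y rest]].
Qed.

Record BlockP (ops : seq TOp) (o : SOp) (r : nat) : Prop := {
  bp_r : r < size ops;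
  bp_rd : forall x v, o = SRd x v -> get ops r = Some (RdM x v);
  bp_wr : forall x v, o = SWr x v -> get ops r = Some (TBcast x v p (blk x));
  bp_rdi : forall j x v, get ops j = Some (RdM x v) -> j = r /\ o = SRd x v;
  bp_bci : forall j x v s l, get ops j = Some (TBcast x v s l) -> j = r /\ o = SWr x v;
  bp_wrc : forall j c n, get ops j = Some (WrC c n) -> c = WR /\ 0 < j /\
        exists n', get ops j.-1 = Some (RdC WR n') /\ n = n'.+1;
  bp_bcp : forall j x v s l, get ops j = Some (TBcast x v s l) -> 0 < j /\
        exists n, get ops j.-1 = Some (WrC WR n);
  bp_nod : forall j b x v s l, get ops j <> Some (TDeliver b x v s l);
  bp_nowm : forall j x v, get ops j <> Some (WrM x v);
  bp_w1 : tau = SWFR -> forall x v, o = SWr x v -> exists e a b, r < e /\ e.+1 < size ops /\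
      get ops e = Some (RdC WP a) /\ get ops e.+1 = Some (RdC WR b) /\ b <= a;
  bp_w2 : tau = FWSR -> forall x v, o = SRd x v -> exists e a b, e.+1 < r /\
      get ops e = Some (RdC WP a) /\ get ops e.+1 = Some (RdC WR b) /\ b <= a }.

Ltac gdes := repeat match goal with
  | H : get (_ :: _) ?j = _ |- _ => destruct j; simpl in H
  | H : (match ?j with 0 => _ | _.+1 => _ end) = _ |- _ => destruct j; simpl in H
  end; simpl.
Ltac fin := repeat match goal with
  | H : Some _ = Some _ |- _ => injection H; clear H; intros
  | H : SRd _ _ = SRd _ _ |- _ => injection H; clear H; intros
  | H : SWr _ _ = SWr _ _ |- _ => injection H; clear H; intros
  | Hr : forall j o, get ?w j = Some o -> exists (c : Ctr) (n : nat), o = _ c n,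
    H : get ?w _ = Some _ |- _ => destruct (Hr _ _ H) as [?c [?n ?]]; clear H
  end;
  subst; try discriminate; try congruence; try done; try (split; done).

Lemma block_ok i ops o : Subroutine tau blk p i ops o -> exists r, BlockP ops o r.
Proof.
case=> [x v Ht|x v n w Ht Hw|x v w Ht Hw|x v n Ht].
- exists 0; split; intros; try intro; simpl in *; gdes; fin.
- have Hr := wait_rdc Hw.
  have W1 : exists e a b, 2 < e /\ e.+1 < size ([:: RdC WR n; WrC WR n.+1; TBcast x v p (blk x)] ++ w) /\
      get ([:: RdC WR n; WrC WR n.+1; TBcast x v p (blk x)] ++ w) e = Some (RdC WP a) /\
      get ([:: RdC WR n; WrC WR n.+1; TBcast x v p (blk x)] ++ w) e.+1 = Some (RdC WR b) /\ b <= a.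
  { have [a [b [Hab [Hs [Ha Hb]]]]] := wait_exit Hw.
    have [k Ek] : exists k, size w = k.+2 by exists (size w).-2; case: (size w) Hs => [|[|k]].
    rewrite Ek /= in Ha Hb.
    exists k.+3, a, b; rewrite size_cat Ek /=; split => //. }
  exists 2; constructor; first [by move=> _ ? ? [<- <-]; exact W1 | (intros; try intro; simpl in *; gdes; fin;
    try (by split; eauto); try congruence)].
- have Hr := wait_rdc Hw.
  have Hlast : get (w ++ [:: RdM x v]) (size w) = Some (RdM x v) by rewrite get_catR // subnn.
  have Hin : forall j o', get (w ++ [:: RdM x v]) j = Some o' -> j = size w \/ exists (c : Ctr) (n : nat), o' = RdC c n.
  { move=> j o'; case: (ltnP j (size w)) => Hj; first by rewrite get_catL // => /Hr; right.
    rewrite get_catR // => H; left; move: H; case E: (j - size w) => [|k] //= _.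
    by apply/eqP; rewrite eqn_leq Hj -subn_eq0 E. }
  have W2 : exists e a b, e.+1 < size w /\ get (w ++ [:: RdM x v]) e = Some (RdC WP a) /\
      get (w ++ [:: RdM x v]) e.+1 = Some (RdC WR b) /\ b <= a.
  { have [a [b [Hab [Hs [Ha Hb]]]]] := wait_exit Hw.
    have [k Ek] : exists k, size w = k.+2 by exists (size w).-2; case: (size w) Hs => [|[|k]].
    rewrite Ek /= in Ha Hb.
    exists k, a, b; rewrite !get_catL ?Ek //; split => //. }
  exists (size w); constructor; first [by move=> _ ? ? [<- <-]; exact W2 | (intros; try intro;
     try (match goal with H : get _ _ = _ |- _ =>
     let H' := fresh in have H' := Hin _ _ H; destruct H' as [?|[? [? ?]]]; subst; rewrite ?Hlast in H end); fin;
     try (by rewrite size_cat addn1); try congruence)].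
- exists 2; split; intros; try intro; simpl in *; gdes; fin; try (by split; eauto); try congruence.
Qed.

Record MainP (T : seq TOp) (os : seq SOp) (pos : nat -> nat) : Prop := {
  mp_mono : forall k1 k2, k1 < k2 -> k2 < size os -> pos k1 < pos k2;
  mp_size : forall k, k < size os -> pos k < size T;
  mp_rd : forall k x v, get os k = Some (SRd x v) -> get T (pos k) = Some (RdM x v);
  mp_wr : forall k x v, get os k = Some (SWr x v) -> get T (pos k) = Some (TBcast x v p (blk x));
  mp_rdi : forall j x v, get T j = Some (RdM x v) -> exists k, pos k = j /\ get os k = Some (SRd x v);
  mp_bci : forall j x v s l, get T j = Some (TBcast x v s l) -> exists k, pos k = j /\ get os k = Some (SWr x v);
  mp_wrc : forall j c n, get T j = Some (WrC c n) -> c = WR /\ 0 < j /\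
        exists n', get T j.-1 = Some (RdC WR n') /\ n = n'.+1;
  mp_bcp : forall j x v s l, get T j = Some (TBcast x v s l) -> 0 < j /\
        exists n, get T j.-1 = Some (WrC WR n);
  mp_nod : forall j b x v s l, get T j <> Some (TDeliver b x v s l);
  mp_nowm : forall j x v, get T j <> Some (WrM x v);
  mp_w1 : tau = SWFR -> forall k x v, get os k = Some (SWr x v) -> exists e a b, pos k < e /\
      (forall k', k < k' -> k' < size os -> e.+1 < pos k') /\
      get T e = Some (RdC WP a) /\ get T e.+1 = Some (RdC WR b) /\ b <= a;
  mp_w2 : tau = FWSR -> forall k x v, get os k = Some (SRd x v) -> exists e a b, e.+1 < pos k /\
      (forall k', k' < k -> pos k' < e) /\
      get T e = Some (RdC WP a) /\ get T e.+1 = Some (RdC WR b) /\ b <= a }.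

Lemma main_ok iss T os : MainRun (Subroutine tau blk p) iss T os -> exists pos, MainP T os pos.
Proof.
elim=> [|i ops o iss' T' os' Hsub _ [pos Hp]].
  by exists (fun _ => 0); split=> //; case.
have [r Hb] := block_ok Hsub.
have Hr := bp_r Hb.
exists (fun k => if k is k'.+1 then size ops + pos k' else r).
have gL : forall j, j < size ops -> get (ops ++ T') j = get ops j by move=> j; apply: get_catL.
have gR : forall j, get (ops ++ T') (size ops + j) = get T' j.
  by move=> j; rewrite get_catR ?leq_addr // addKn.
have gR' : forall j, size ops <= j -> get (ops ++ T') j = get T' (j - size ops).
  by move=> j; apply: get_catR.
split.
- case=> [|k1] [|k2] //=; first by move=> _ _; apply: leq_trans Hr (leq_addr _ _).
  by rewrite !ltnS => H1 H2; rewrite ltn_add2l; apply: (mp_mono Hp).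
- case=> [|k] /= Hk; first by rewrite size_cat; apply: leq_trans Hr (leq_addr _ _).
  by rewrite size_cat ltn_add2l; apply: (mp_size Hp).
- case=> [|k] x v /=; first by move=> [Ho]; rewrite gL // (bp_rd Hb Ho).
  by rewrite gR; apply: (mp_rd Hp).
- case=> [|k] x v /=; first by move=> [Ho]; rewrite gL // (bp_wr Hb Ho).
  by rewrite gR; apply: (mp_wr Hp).
- move=> j x v; case: (ltnP j (size ops)) => Hj.
    by rewrite gL // => /(bp_rdi Hb) [-> ->]; exists 0.
  rewrite gR' // => /(mp_rdi Hp) [k [Hk1 Hk2]]; exists k.+1; split=> //; lia.
- move=> j x v s' l; case: (ltnP j (size ops)) => Hj.
    by rewrite gL // => /(bp_bci Hb) [-> ->]; exists 0.
  rewrite gR' // => /(mp_bci Hp) [k [Hk1 Hk2]]; exists k.+1; split=> //; lia.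
- move=> j c n; case: (ltnP j (size ops)) => Hj.
    rewrite gL // => /(bp_wrc Hb) [-> [Hj0 [n' [H1 H2]]]]; split=> //; split=> //.
    by exists n'; rewrite gL //; lia.
  rewrite gR' // => /(mp_wrc Hp) [-> [Hj0 [n' [H1 H2]]]]; split=> //; split; first lia.
  by exists n'; rewrite gR'; [have ->: j.-1 - size ops = (j - size ops).-1 by lia|lia].
- move=> j x v s' l; case: (ltnP j (size ops)) => Hj.
    rewrite gL // => /(bp_bcp Hb) [Hj0 [n' H1]]; split=> //.
    by exists n'; rewrite gL //; lia.
  rewrite gR' // => /(mp_bcp Hp) [Hj0 [n' H1]]; split; first lia.
  by exists n'; rewrite gR'; [have ->: j.-1 - size ops = (j - size ops).-1 by lia|lia].
- move=> j b x v s' l; case: (ltnP j (size ops)) => Hj.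
    by rewrite gL //; apply: (bp_nod Hb).
  by rewrite gR' //; apply: (mp_nod Hp).
- move=> j x v; case: (ltnP j (size ops)) => Hj.
    by rewrite gL //; apply: (bp_nowm Hb).
  by rewrite gR' //; apply: (mp_nowm Hp).
- move=> Ht [|k] x v /=.
    move=> [Ho]; have [e [a [b [H1 [H2 [H3 [H4 H5]]]]]]] := bp_w1 Hb Ht Ho.
    exists e, a, b; split=> //; split; first by case=> // k' _ _; lia.
    by rewrite !gL //; lia.
  move=> Hk; have [e [a [b [H1 [H2 [H3 [H4 H5]]]]]]] := mp_w1 Hp Ht Hk.
  exists (size ops + e), a, b; split; first lia.
  split; first by case=> // k' H6 H7; have := H2 k' H6 H7; lia.
  by rewrite -addnS !gR.
- move=> Ht [|k] x v /=.
    move=> [Ho]; have [e [a [b [H1 [H3 [H4 H5]]]]]] := bp_w2 Hb Ht Ho.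
    exists e, a, b; split=> //; split; first by case.
    by rewrite !gL //; lia.
  move=> Hk; have [e [a [b [H1 [H2 [H3 [H4 H5]]]]]]] := mp_w2 Hp Ht Hk.
  exists (size ops + e), a, b; split; first lia.
  split; first by case=> [|k'] H6; [lia|have := H2 k' H6; lia].
  by rewrite -addnS !gR.
Qed.

End MainStruct.


Section DelStruct.
Variables (Var Val : Type) (Proc : finType) (m : nat) (p : Proc).
Notation TOp := (TOp Var Val Proc m).
Notation RdC := (@TRdC Var Val Proc m).
Notation WrC := (@TWrC Var Val Proc m).
Notation RdM := (@TRdM Var Val Proc m).
Notation WrM := (@TWrM Var Val Proc m).

Record DelP (D : seq TOp) : Prop := {
 dp_del : forall j b x v s l, get D j = Some (TDeliver b x v s l) ->
    get D j.+1 = None \/ get D j.+1 = Some (WrM x v);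
 dp_wm : forall j x v, get D j = Some (WrM x v) -> 0 < j /\
    exists b s l, get D j.-1 = Some (TDeliver b x v s l);
 dp_wrc : forall j c n, get D j = Some (WrC c n) -> c = WP /\ 2 < j /\
    (exists n', get D j.-1 = Some (RdC WP n') /\ n = n'.+1) /\
    (exists b x v l, get D (j-3) = Some (TDeliver b x v p l));
 dp_nobc : forall j x v s l, get D j <> Some (TBcast x v s l);
 dp_nordm : forall j x v, get D j <> Some (RdM x v) }.

Ltac gdes := repeat match goal with
  | H : get (_ :: _) ?j = _ |- _ => destruct j; simpl in H
  | H : (match ?j with 0 => _ | _.+1 => _ end) = _ |- _ => destruct j; simpl in H
  end; simpl.
Ltac fin := repeat match goal with
  | H : Some _ = Some _ |- _ => injection H; clear H; intros
  end; subst; try discriminate; try congruence; try done; try (split; done).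

Lemma iter_ok it : DelivIter p it -> DelP it /\
  forall j b x v s l, get it j = Some (TDeliver b x v s l) -> j.+1 < size it.
Proof.
case=> [b x v lab n|b x v src lab Hsrc]; (split; [split|]); intros; try intro; simpl in *; gdes; fin;
  try (by right); try (split; [done|do 3 eexists; reflexivity]).
split=> //; split=> //; split; [by exists n|by do 4 eexists].
Qed.

Lemma DelP_take s n : DelP s -> DelP (take n s).
Proof.
case=> H1 H2 H3 H4 H5; split.
- move=> j b x v s' l Hj; have Hjn := get_some Hj; rewrite size_take_min in Hjn.
  have Hjn' : j < n by lia.
  case: (ltnP j.+1 n) => Hn; first by rewrite get_take2 //; apply: H1; apply: get_take Hj.
  by left; apply: get_none; rewrite size_take_min; lia.
- move=> j x v Hj; have Hjn := get_some Hj; rewrite size_take_min in Hjn.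
  have Hjn' : j < n by lia.
  have [A [b [s' [l B]]]] := H2 _ _ _ (get_take Hj).
  by split=> //; exists b, s', l; rewrite get_take2 //; lia.
- move=> j c n0 Hj; have Hjn := get_some Hj; rewrite size_take_min in Hjn.
  have Hjn' : j < n by lia.
  have [A [B [[n' [C D]] [b [x [v [l E]]]]]]] := H3 _ _ _ (get_take Hj).
  split=> //; split=> //; split; first by exists n'; rewrite get_take2 //; lia.
  by exists b, x, v, l; rewrite get_take2 //; lia.
- by move=> j x v s' l H; exact: (H4 _ _ _ _ _ (get_take H)).
- by move=> j x v H; exact: (H5 _ _ _ (get_take H)).
Qed.

Lemma DelP_cat s1 s2 : DelP s1 -> DelP s2 ->
  (forall j b x v s l, get s1 j = Some (TDeliver b x v s l) -> j.+1 < size s1) ->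
  DelP (s1 ++ s2).
Proof.
case=> H1 H2 H3 H4 H5 [G1 G2 G3 G4 G5] Hl.
have gL : forall j, j < size s1 -> get (s1 ++ s2) j = get s1 j by move=> j; apply: get_catL.
have gR : forall j, size s1 <= j -> get (s1 ++ s2) j = get s2 (j - size s1) by move=> j; apply: get_catR.
split.
- move=> j b x v s' l; case: (ltnP j (size s1)) => Hj.
    rewrite gL // => H; have Hj1 := Hl _ _ _ _ _ _ H; rewrite gL //; exact: H1 H.
  rewrite !gR ?subSn //; [exact: G1|lia].
- move=> j x v; case: (ltnP j (size s1)) => Hj.
    rewrite gL // => /H2 [? [b [s' [l B]]]]; split=> //; exists b, s', l; rewrite gL //; lia.
  rewrite gR // => /G2 [? [b [s' [l B]]]]; split; first lia.
  exists b, s', l; rewrite gR; last lia.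
  by have -> : j.-1 - size s1 = (j - size s1).-1 by lia.
- move=> j c n; case: (ltnP j (size s1)) => Hj.
    rewrite gL // => /H3 [-> [A [[n' [B C]] [b [x [v [l E]]]]]]].
    split=> //; split=> //; split; first by exists n'; rewrite gL //; lia.
    by exists b, x, v, l; rewrite gL //; lia.
  rewrite gR // => /G3 [-> [A [[n' [B C]] [b [x [v [l E]]]]]]].
  split=> //; split; first lia; split.
    exists n'; rewrite gR; last lia.
    by have -> : j.-1 - size s1 = (j - size s1).-1 by lia.
  exists b, x, v, l; rewrite gR; last lia.
  by have -> : j - 3 - size s1 = (j - size s1) - 3 by lia.
- move=> j x v s' l; case: (ltnP j (size s1)) => Hj; [rewrite gL //; exact: H4|rewrite gR //; exact: G4].
- move=> j x v; case: (ltnP j (size s1)) => Hj; [rewrite gL //; exact: H5|rewrite gR //; exact: G5].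
Qed.

Lemma deliv_ok D : DelivRun p D -> DelP D.
Proof.
elim=> [|pre rest Hit|it ops Hit _ IH].
- by split=> //; case.
- have [H _] := iter_ok Hit.
  by have := DelP_take (size pre) H; rewrite take_size_cat.
- have [H Hl] := iter_ok Hit; exact: DelP_cat.
Qed.

End DelStruct.


Section Proof.
Variables (Var Val : Type) (Proc : finType) (m : nat) (blk : Var -> option 'I_m)
  (init : Var -> Val) (tau : Variant) (tc : Proc -> Thr -> seq (TOp Var Val Proc m))
  (sc : Proc -> seq (SOp Var Val)).
Notation TOp := (TOp Var Val Proc m).
Notation RdC := (@TRdC Var Val Proc m).
Notation WrC := (@TWrC Var Val Proc m).
Notation RdM := (@TRdM Var Val Proc m).
Notation WrM := (@TWrM Var Val Proc m).
Notation TId := (TId Proc).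
Notation tl := (tlook tc).
Variable pos : Proc -> nat -> nat.
Hypothesis HMP : forall q, MainP blk tau q (tc q Main) (sc q) (pos q).
Hypothesis HDP : forall q, DelP q (tc q Deliv).
Variable S : Proc -> seq TId.
Hypothesis HS1 : forall p, enumerates (inO tc p) (S p).
Hypothesis HS2 : forall p, tvalid tc init (S p).
Hypothesis HS3 : forall p a b, inO tc p a -> inO tc p b -> (progT a b \/ delOrder tc a b) ->
  before (S p) a b.
Hypothesis HS4 : forall p b x v src lab, tl b = Some (TBcast x v src lab) <->
  exists d, inO tc p d /\ tl d = Some (TDeliver b x v src lab).
Hypothesis HS5 : forall l p q b1 b2, delBefore tc (S p) l b1 b2 <-> delBefore tc (S q) l b1 b2.

Definition idx p (t : TId) : nat := epsilon (inhabits 0) (fun i => get (S p) i = Some t).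

Lemma inS p i t : get (S p) i = Some t -> inO tc p t.
Proof. by move=> H; apply: (proj2 (proj2 (HS1 p) t)); exists i. Qed.

Lemma idxP p t : inO tc p t -> get (S p) (idx p t) = Some t.
Proof. move=> H; exact: (epsilon_spec (inhabits 0) (fun i => get (S p) i = Some t) (proj1 (proj2 (HS1 p) t) H)). Qed.

Lemma idx_eq p i t : get (S p) i = Some t -> idx p t = i.
Proof. move=> H; exact: (proj1 (HS1 p)) (idxP (inS H)) H. Qed.

Lemma idx_size p t : inO tc p t -> idx p t < size (S p).
Proof. move=> H; exact: get_some (idxP H). Qed.

Lemma idx_inj p a b : inO tc p a -> inO tc p b -> idx p a = idx p b -> a = b.
Proof. by move=> /idxP Ha /idxP Hb E; rewrite E Hb in Ha; case: Ha. Qed.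

Lemma beforeE p a b : inO tc p a -> inO tc p b -> (before (S p) a b <-> idx p a < idx p b).
Proof.
move=> Ha Hb; split.
- by move=> [i [j [Hij [Hi Hj]]]]; rewrite (idx_eq Hi) (idx_eq Hj).
- by move=> H; exists (idx p a), (idx p b); split=> //; split; apply: idxP.
Qed.

Lemma idx_prog p a b : inO tc p a -> inO tc p b -> progT a b -> idx p a < idx p b.
Proof. by move=> Ha Hb H; apply/(beforeE Ha Hb); apply: HS3 => //; left. Qed.

Lemma idx_del p a b : inO tc p a -> inO tc p b -> delOrder tc a b -> idx p a < idx p b.
Proof. by move=> Ha Hb H; apply/(beforeE Ha Hb); apply: HS3 => //; right. Qed.

Lemma idx_same p a b : inO tc p a -> inO tc p b -> a.1 = b.1 -> idx p a < idx p b -> a.2 < b.2.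
Proof.
move=> Ha Hb E Hlt; case: (ltngtP a.2 b.2) => // H.
- by have := idx_prog Hb Ha (conj (esym E) H); rewrite ltnNge ltnW.
- have Eab : a = b by move: E H; case: a {Ha Hlt} => [? ?]; case: b {Hb} => [? ?] /= -> ->.
  by rewrite Eab ltnn in Hlt.
Qed.

Lemma inO_mk p th j o : tl (p, th, j) = Some o -> inO tc p (p, th, j).
Proof. by move=> H; split=> //; exists o. Qed.

Lemma thr_del t b x v s l : tl t = Some (TDeliver b x v s l) -> t.1.2 = Deliv.
Proof. by case: t => [[q []] j] //= H; case: (mp_nod (HMP q) H). Qed.

Lemma thr_wm t x v : tl t = Some (WrM x v) -> t.1.2 = Deliv.
Proof. by case: t => [[q []] j] //= H; case: (mp_nowm (HMP q) H). Qed.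

Lemma thr_rdm t x v : tl t = Some (RdM x v) -> t.1.2 = Main.
Proof. by case: t => [[q []] j] //= H; case: (dp_nordm (HDP q) H). Qed.

Lemma thr_bc t x v s l : tl t = Some (TBcast x v s l) -> t.1.2 = Main.
Proof. by case: t => [[q []] j] //= H; case: (dp_nobc (HDP q) H). Qed.

Lemma thr_wr t n : tl t = Some (WrC WR n) -> t.1.2 = Main.
Proof. by case: t => [[q []] j] //= /(dp_wrc (HDP q)) []. Qed.

Lemma thr_wp t n : tl t = Some (WrC WP n) -> t.1.2 = Deliv.
Proof. by case: t => [[q []] j] //= /(mp_wrc (HMP q)) []. Qed.

Lemma bc_src b x v s l : tl b = Some (TBcast x v s l) ->
  exists k, b = (s, Main, pos s k) /\ get (sc s) k = Some (SWr x v) /\ l = blk x.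
Proof.
move=> H; have Ht := thr_bc H; move: H; case: b Ht => [[q th] j] /= -> H.
have H' : get (tc q Main) j = Some (TBcast x v s l) := H.
have [k [Ek Hk]] := mp_bci (HMP q) H'.
have E : Some (TBcast x v q (blk x)) = Some (TBcast x v s l) by rewrite -(mp_wr (HMP q) Hk) Ek.
injection E => El Es.
by exists k; rewrite -Es El Ek; split.
Qed.

Definition del p (b : TId) : TId :=
  epsilon (inhabits (p, Main, 0)) (fun d => inO tc p d /\ exists x v s l, tl d = Some (TDeliver b x v s l)).

Lemma delP p b x v s l : tl b = Some (TBcast x v s l) ->
  inO tc p (del p b) /\ tl (del p b) = Some (TDeliver b x v s l).
Proof.
move=> Hb; have [d [Hd Hdd]] := proj1 (HS4 p b x v s l) Hb.
have [Hd' [x' [v' [s' [l' Hdd']]]]] : inO tc p (del p b) /\ exists x v s l, tl (del p b) = Some (TDeliver b x v s l).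
  apply: (epsilon_spec (inhabits (p, Main, 0)) (fun d => inO tc p d /\ exists x v s l, tl d = Some (TDeliver b x v s l))).
  by exists d; split=> //; exists x, v, s, l.
split=> //.
have : tl b = Some (TBcast x' v' s' l') by apply/(HS4 p); exists (del p b).
by rewrite Hb => [[-> -> -> ->]].
Qed.

Lemma del_uniq p d b x v s l : inO tc p d -> tl d = Some (TDeliver b x v s l) -> d = del p b.
Proof.
move=> Hd Hdd.
have Hb : tl b = Some (TBcast x v s l) by apply/(HS4 p); exists d.
have [Hd' Hdd'] := delP p Hb.
have [_ [_ [_ H4]]] := HS2 p.
have E := H4 _ _ _ _ _ _ _ _ _ (idxP Hd) (idxP Hd') Hdd Hdd'.
exact: idx_inj Hd Hd' E.
Qed.


Definition B (a : SId Proc) : TId := (a.1, Main, pos a.1 a.2).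

Lemma B_tl a x v : slook sc a = Some (SWr x v) -> tl (B a) = Some (TBcast x v a.1 (blk x)).
Proof. exact: (mp_wr (HMP a.1)). Qed.

Lemma B_inj a1 a2 o1 o2 : slook sc a1 = Some o1 -> slook sc a2 = Some o2 -> B a1 = B a2 -> a1 = a2.
Proof.
case: a1 => q1 k1; case: a2 => q2 k2 /= H1 H2 [E1 E2]; subst q2.
have S1 := get_some H1; have S2 := get_some H2.
case: (ltngtP k1 k2) => H; last by rewrite H.
- by have := mp_mono (HMP q1) H S2; rewrite E2 ltnn.
- by have := mp_mono (HMP q1) H S1; rewrite E2 ltnn.
Qed.

Definition wkey p a : nat := let d := del p (B a) in
  if tl (d.1, d.2.+1) is Some _ then idx p (d.1, d.2.+1) else size (S p) + idx p d.

Definition key p (a : SId Proc) : nat :=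
  match slook sc a with
  | Some (SRd _ _) => idx p (p, Main, pos p a.2)
  | Some (SWr _ _) => wkey p a
  | None => 0 end.

Definition Dom p a := inOs sc p a \/ isWrite sc a.

Lemma dom_cases p a : Dom p a ->
  (a.1 = p /\ exists x v, slook sc a = Some (SRd x v)) \/ (exists x v, slook sc a = Some (SWr x v)).
Proof.
case=> [[E [[x v|x v] H]]|[x [v H]]]; [left; split=> //; by exists x, v|right; by exists x, v|right; by exists x, v].
Qed.

Lemma Rk p a x v : slook sc a = Some (SRd x v) -> a.1 = p ->
  key p a = idx p (p, Main, pos p a.2) /\ tl (p, Main, pos p a.2) = Some (RdM x v).
Proof. by move=> H E; rewrite /key H; split=> //; subst p; apply: (mp_rd (HMP a.1)). Qed.

Lemma Wk p a x v : slook sc a = Some (SWr x v) -> exists i, del p (B a) = (p, Deliv, i) /\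
  get (tc p Deliv) i = Some (TDeliver (B a) x v a.1 (blk x)) /\
  ((get (tc p Deliv) i.+1 = Some (WrM x v) /\ key p a = idx p (p, Deliv, i.+1)) \/
   (get (tc p Deliv) i.+1 = None /\ key p a = size (S p) + idx p (p, Deliv, i))).
Proof.
move=> Ha; have [Hin Hd] := delP p (B_tl Ha).
have Ht := thr_del Hd.
move: Hin Hd Ht; case E: (del p (B a)) => [[q th] i] [/= Eq _] Hd /= Et; subst q th.
exists i; split=> //; split=> //.
rewrite /key Ha /wkey E /tlook /=.
case: (dp_del (HDP p) Hd) => ->; [by right; split|by left; split].
Qed.

Lemma delpos p a x v i : slook sc a = Some (SWr x v) -> del p (B a) = (p, Deliv, i) ->
  get (tc p Deliv) i = Some (TDeliver (B a) x v a.1 (blk x)).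
Proof. by move=> Ha Ed; have [i' [E [H _]]] := Wk p Ha; rewrite Ed in E; case: E => ->. Qed.

Lemma Lww p a1 a2 x1 v1 x2 v2 i1 i2 : slook sc a1 = Some (SWr x1 v1) -> slook sc a2 = Some (SWr x2 v2) ->
  del p (B a1) = (p, Deliv, i1) -> del p (B a2) = (p, Deliv, i2) -> i1 < i2 -> key p a1 < key p a2.
Proof.
move=> H1 H2 E1 E2 Hi.
have [i1' [E1' [G1 C1]]] := Wk p H1; rewrite E1 in E1'; case: E1' => ?; subst i1'.
have [i2' [E2' [G2 C2]]] := Wk p H2; rewrite E2 in E2'; case: E2' => ?; subst i2'.
case: C1 => [[W1 ->]|[W1 ->]]; case: C2 => [[W2 ->]|[W2 ->]].
- by apply: idx_prog; [apply: inO_mk W1|apply: inO_mk W2|split].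
- have := idx_size (inO_mk W1); lia.
- have := get_some G2; have := get_none_inv W1; lia.
- rewrite ltn_add2l; apply: idx_prog; [apply: inO_mk G1|apply: inO_mk G2|by split].
Qed.


Definition isBc (o : option TOp) : bool := if o is Some (TBcast _ _ _ _) then true else false.
Definition cntB p j := count (fun i => isBc (get (tc p Main) i)) (iota 0 j).
Definition isOwn p (o : option TOp) : bool := if o is Some (TDeliver _ _ _ s _) then s == p else false.
Definition cntO p j := count (fun i => isOwn p (get (tc p Deliv) i)) (iota 0 j).

Lemma isBcP o : isBc o -> exists x v s l, o = Some (TBcast x v s l).
Proof. by case: o => [[]|] //= *; do 4 eexists. Qed.

Lemma isOwnP p o : isOwn p o -> exists b x v l, o = Some (TDeliver b x v p l).
Proof. by case: o => [[]|] //= b x v s l /eqP ->; do 4 eexists. Qed.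

Lemma validC p : valid_rw (fun a c n => tl a = Some (WrC c n))
           (fun a c n => tl a = Some (RdC c n)) (fun _ => 0) (S p).
Proof. exact: (proj1 (proj2 (HS2 p))). Qed.

Lemma WR_inv p j : (forall n, get (tc p Main) j = Some (RdC WR n) -> cntB p j <= n) /\
                   (forall n, get (tc p Main) j = Some (WrC WR n) -> cntB p j < n).
Proof.
elim/ltn_ind: j => j IH; split.
- move=> n Hr; set r := (p, Main, j); have Hin : inO tc p r := inO_mk Hr.
  case: (validC (idxP Hin) Hr) => [[jj [w [Hjj [Hw [Hww Hno]]]]]|[Hno ->]].
  + have Hwin := inS Hw; have Hth := thr_wr Hww.
    move: Hwin Hw Hww Hno Hth; case: w => [[q th] j1] Hwin Hw Hww Hno /= Eth; subst th.
    have Eq : q = p by case: Hwin.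
    subst q.
    have Ejj := idx_eq Hw.
    have Hj1 : j1 < j by apply: (idx_same Hwin Hin) => //; rewrite Ejj.
    have Hc1 := (proj2 (IH j1 Hj1)) n Hww.
    rewrite /cntB (cnt_split _ (ltnW Hj1)).
    suff : count (fun i => isBc (get (tc p Main) i)) (iota j1 (j - j1)) <= 1.
      by move: Hc1; rewrite /cntB; lia.
    apply: (count_le1 (c := j1.+1)); last exact: iota_uniq.
    move=> i; rewrite mem_iota => /andP [Hi1 Hi2] /isBcP [x [v [s [l Hb]]]].
    have [Hi0 [n'' Hw'']] := mp_bcp (HMP p) Hb.
    case: (ltngtP i.-1 j1) => Hc.
    * have Ei : i = j1 by lia.
      have Hww' : get (tc p Main) j1 = Some (WrC WR n) := Hww.
      by rewrite Ei Hww' in Hb.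
    * have Hw'in : inO tc p (p, Main, i.-1) := inO_mk Hw''.
      have H1 : jj < idx p (p, Main, i.-1) by rewrite -Ejj; apply: idx_prog => //; split.
      have H2 : idx p (p, Main, i.-1) < idx p r by apply: idx_prog => //; split=> //=; lia.
      by case: (Hno _ _ _ H1 H2 (idxP Hw'in) Hw'').
    * lia.
  + rewrite /cntB count_0 // => i; rewrite mem_iota => /andP [_ Hi].
    apply/negP => /isBcP [x [v [s [l Hb]]]].
    have [Hi0 [n'' Hw'']] := mp_bcp (HMP p) Hb.
    have Hw'in : inO tc p (p, Main, i.-1) := inO_mk Hw''.
    have H2 : idx p (p, Main, i.-1) < idx p r by apply: idx_prog => //; split=> //=; lia.
    exact: (Hno _ _ _ H2 (idxP Hw'in) Hw'').
- move=> n Hw; have [_ [Hj0 [n' [Hr En]]]] := mp_wrc (HMP p) Hw.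
  have Hc := (proj1 (IH j.-1 (ltac:(lia) : j.-1 < j))) n' Hr.
  have -> : j = j.-1.+1 by lia.
  by rewrite /cntB cnt_S Hr /= addn0; move: Hc; rewrite /cntB; lia.
Qed.


Lemma WP_inv p j n : get (tc p Deliv) j = Some (WrC WP n) -> n <= cntO p (j - 2).
Proof.
elim/ltn_ind: j n => j IH n Hw.
have [_ [Hj2 [[n' [Hr En]] [b [x [v [l Hd]]]]]]] := dp_wrc (HDP p) Hw.
have Ecnt : cntO p (j - 2) = (cntO p (j - 3)).+1.
  have -> : j - 2 = (j - 3).+1 by lia.
  by rewrite /cntO cnt_S Hd /= eqxx addn1.
rewrite Ecnt En ltnS.
set r := (p, Deliv, j.-1); have Hin : inO tc p r := inO_mk Hr.
case: (validC (idxP Hin) Hr) => [[jj [w [Hjj [Hw' [Hww Hno]]]]]|[Hno ->]] //.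
have Hwin := inS Hw'; have Hth := thr_wp Hww.
move: Hwin Hw' Hww Hno Hth; case: w => [[q th] j1] Hwin Hw' Hww Hno /= Eth; subst th.
have Eq : q = p by case: Hwin.
subst q.
have Ejj := idx_eq Hw'.
have Hj1 : j1 < j.-1 by apply: (idx_same Hwin Hin) => //; rewrite Ejj.
have Hww' : get (tc p Deliv) j1 = Some (WrC WP n') := Hww.
have Hc1 := IH j1 (ltac:(lia)) n' Hww'.
have [_ [Hj12 [[n1 [Hr1 _]] _]]] := dp_wrc (HDP p) Hww'.
have Hj1' : j1 <= j - 4.
  case: (ltnP (j - 4) j1) => // Hc.
  have [E|E] : j1 = j - 3 \/ j1 = j - 2 by lia.
  - by rewrite E Hd in Hww'.
  - have E' : j1.-1 = j - 3 by lia.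
    by rewrite E' Hd in Hr1.
apply: (leq_trans Hc1); apply: cnt_mono; lia.
Qed.


Lemma wait_between p k1 k2 x v x' v' : k1 < k2 -> get (sc p) k1 = Some (SWr x v) ->
  get (sc p) k2 = Some (SRd x' v') -> exists e a b, pos p k1 < e /\ e.+1 < pos p k2 /\
  get (tc p Main) e = Some (RdC WP a) /\ get (tc p Main) e.+1 = Some (RdC WR b) /\ b <= a.
Proof.
move=> Hk H1 H2; case Et: tau.
- have [e [a [b [A [B' C]]]]] := mp_w1 (HMP p) Et H1.
  by exists e, a, b; split=> //; split=> //; apply: B' => //; apply: get_some H2.
- have [e [a [b [A [B' C]]]]] := mp_w2 (HMP p) Et H2.
  by exists e, a, b; split=> //; apply: B'.
Qed.

Lemma cnt_own p k1 x v i : get (sc p) k1 = Some (SWr x v) -> del p (B (p, k1)) = (p, Deliv, i) ->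
  cntO p i <= cntB p (pos p k1).
Proof.
move=> Ha Ed.
have Hdi : get (tc p Deliv) i = Some (TDeliver (B (p, k1)) x v p (blk x)) := delpos (a := (p, k1)) Ha Ed.
rewrite /cntO /cntB -!size_filter.
set L1 := filter _ (iota 0 i).
set f := fun i' => match get (tc p Deliv) i' with Some (TDeliver b _ _ _ _) => b.2 | _ => 0 end.
have Hb : forall i', i' \in L1 -> i' < i /\ exists x'' v'' l'',
    get (tc p Deliv) i' = Some (TDeliver (p, Main, f i') x'' v'' p l'') /\
    tl (p, Main, f i') = Some (TBcast x'' v'' p l'').
  move=> i'; rewrite mem_filter mem_iota add0n => /andP [/isOwnP [b [x'' [v'' [l'' Hd]]]] /andP [_ Hi']].
  split=> //.
  have Hdin : inO tc p (p, Deliv, i') := inO_mk Hd.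
  have Hbb : tl b = Some (TBcast x'' v'' p l'') by apply/(HS4 p); exists (p, Deliv, i').
  have [k'' [Eb _]] := bc_src Hbb.
  have Ef : f i' = pos p k'' by rewrite /f Hd Eb.
  exists x'', v'', l''; rewrite Ef -Eb; split=> //.
have Hinj : {in L1 &, injective f}.
  move=> i1 i2 /Hb [_ [x1 [v1 [l1 [D1 _]]]]] /Hb [_ [x2 [v2 [l2 [D2 _]]]]] E.
  rewrite E in D1.
  have := del_uniq (inO_mk D1) D1; have := del_uniq (inO_mk D2) D2.
  by move=> <- [].
have Hu : uniq (map f L1) by rewrite (map_inj_in_uniq Hinj) filter_uniq // iota_uniq.
rewrite -(size_map f); apply: (uniq_leq_size Hu).
move=> _ /mapP [i' Hi' ->]; have [Hlt [x'' [v'' [l'' [D' Bc]]]]] := Hb i' Hi'.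
rewrite mem_filter mem_iota add0n; apply/andP; split; first by rewrite /isBc; move: Bc; rewrite /tlook /= => ->.
apply/andP; split=> //.
case: (ltngtP (f i') (pos p k1)) => // Hc.
- exfalso.
  have Hdin : inO tc p (p, Deliv, i') := inO_mk D'.
  have Hdin0 : inO tc p (p, Deliv, i) := inO_mk Hdi.
  have Hdo : delOrder tc (p, Deliv, i) (p, Deliv, i').
    by do 10 eexists; split; [exact: Hdi|split; [exact: D'|split=> //]].
  have := idx_same Hdin0 Hdin erefl (idx_del Hdin0 Hdin Hdo); rewrite /=; lia.
- exfalso.
  have Eb : B (p, k1) = (p, Main, f i') by rewrite /B /= Hc.
  have := del_uniq (inO_mk D') D'; rewrite -Eb Ed => [[E]]; lia.
Qed.

Lemma hard p k1 k2 x v x' v' : k1 < k2 -> get (sc p) k1 = Some (SWr x v) ->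
  get (sc p) k2 = Some (SRd x' v') -> key p (p, k1) < key p (p, k2).
Proof.
move=> Hk H1 H2.
have [Ek2 Hrd] := Rk (a := (p, k2)) H2 erefl.
rewrite Ek2 /=.
have [e [a' [b' [He1 [He2 [Ha [Hb Hab]]]]]]] := wait_between Hk H1 H2.
have Hwr := (proj1 (WR_inv p e.+1)) b' Hb.
have Hbc : cntB p (pos p k1) < cntB p e.+1.
  have Hbb := mp_wr (HMP p) H1.
  apply: (@leq_trans (cntB p (pos p k1).+1)); last by rewrite /cntB; apply: cnt_mono; lia.
  by rewrite /cntB cnt_S Hbb addn1.
set r := (p, Main, e); have Hin : inO tc p r := inO_mk Ha.
case: (validC (idxP Hin) Ha) => [[jj [w [Hjj [Hw' [Hww _]]]]]|[_ Ea]]; last by exfalso; lia.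
have Hwin := inS Hw'; have Hth := thr_wp Hww.
move: Hwin Hw' Hww Hth; case: w => [[q th] j1] Hwin Hw' Hww /= Eth; subst th.
have Eq : q = p by case: Hwin.
subst q.
have Hww' : get (tc p Deliv) j1 = Some (WrC WP a') := Hww.
have Hwp := WP_inv Hww'.
have [_ [Hj12 _]] := dp_wrc (HDP p) Hww'.
have [i [Ed [Gd C]]] := Wk p (a := (p, k1)) H1.
have Hco := cnt_own H1 Ed.
have Hij : i < j1 - 2.
  rewrite ltnNge; apply/negP => Hc.
  have := cnt_mono (fun i => isOwn p (get (tc p Deliv) i)) Hc; rewrite -/(cntO p _) -/(cntO p _).
  lia.
have Hsz := get_some Hww'.
case: C => [[W ->]|[W _]]; last by have := get_none_inv W; lia.
have Hr2 : inO tc p (p, Main, pos p k2) := inO_mk Hrd.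
apply: (@ltn_trans (idx p r)); last by apply: idx_prog => //; split=> //=; lia.
rewrite -(idx_eq Hw') in Hjj.
apply: leq_ltn_trans Hjj; apply: ltnW; apply: idx_prog; [exact: inO_mk W|exact: Hwin|split=> //=; lia].
Qed.


Lemma delB p a1 a2 x1 v1 x2 v2 : slook sc a1 = Some (SWr x1 v1) -> slook sc a2 = Some (SWr x2 v2) ->
  del p (B a1) = del p (B a2) -> a1 = a2.
Proof.
move=> H1 H2 E.
have [i1 [E1 [G1 _]]] := Wk p H1; have [i2 [E2 [G2 _]]] := Wk p H2.
rewrite E1 E2 in E; case: E => ?; subst i2.
rewrite G1 in G2; injection G2 => _ _ _ _ Ep Eq.
apply: (B_inj H1 H2); by rewrite /B Ep Eq.
Qed.

Lemma w_lt p a1 a2 x1 v1 x2 v2 i1 i2 : slook sc a1 = Some (SWr x1 v1) -> slook sc a2 = Some (SWr x2 v2) ->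
  del p (B a1) = (p, Deliv, i1) -> del p (B a2) = (p, Deliv, i2) ->
  (key p a1 < key p a2 <-> i1 < i2).
Proof.
move=> H1 H2 E1 E2; split; last exact: (Lww H1 H2 E1 E2).
move=> Hk; case: (ltngtP i1 i2) => // Hc.
- by have := Lww H2 H1 E2 E1 Hc; lia.
- subst i2; have E : a1 = a2 := delB H1 H2 (etrans E1 (esym E2)).
  by subst a2; rewrite ltnn in Hk.
Qed.

Lemma Kprog p a b : Dom p a -> Dom p b -> progS a b -> key p a < key p b.
Proof.
case: a => q k1; case: b => q' k2 Da Db [/= Eq Hk]; subst q'.
case: (dom_cases Da) => [[/= Eq [x [v Ha]]]|[x [v Ha]]];
case: (dom_cases Db) => [[/= Eq' [x' [v' Hb]]]|[x' [v' Hb]]].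
- subst q; have [-> R1] := Rk Ha erefl; have [-> R2] := Rk Hb erefl.
  apply: idx_prog; [exact: inO_mk R1|exact: inO_mk R2|split=> //=].
  exact: (mp_mono (HMP p) Hk (get_some Hb)).
- subst q; have [-> R1] := Rk Ha erefl.
  have [i [E [G C]]] := Wk p Hb.
  have Hbt := B_tl Hb.
  have Hbin : inO tc p (B (p, k2)) := inO_mk Hbt.
  have Hdin : inO tc p (p, Deliv, i) := inO_mk G.
  have H1 : idx p (p, Main, pos p k1) < idx p (B (p, k2)).
    apply: idx_prog; [exact: inO_mk R1|exact: Hbin|split=> //=].
    exact: (mp_mono (HMP p) Hk (get_some Hb)).
  have H2 : idx p (B (p, k2)) < idx p (p, Deliv, i).
    have [_ [_ [H3 _]]] := HS2 p.
    exact: (H3 _ _ _ _ _ _ _ _ (idxP Hdin) G (idxP Hbin)).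
  case: C => [[W ->]|[W ->]].
  + apply: (ltn_trans H1); apply: (ltn_trans H2); apply: idx_prog; [exact: Hdin|exact: inO_mk W|by split].
  + have := idx_size Hdin; rewrite /=; lia.
- subst q; exact: (hard Hk Ha Hb).
- have [i1 [E1 [G1 _]]] := Wk p Ha; have [i2 [E2 [G2 _]]] := Wk p Hb.
  apply/(w_lt Ha Hb E1 E2).
  have Hd1 : inO tc p (p, Deliv, i1) := inO_mk G1.
  have Hd2 : inO tc p (p, Deliv, i2) := inO_mk G2.
  have Hdo : delOrder tc (p, Deliv, i1) (p, Deliv, i2).
    do 10 eexists; split; [exact: G1|split; [exact: G2|split=> //=]].
    exact: (mp_mono (HMP q) Hk (get_some Hb)).
  exact: (idx_same Hd1 Hd2 erefl (idx_del Hd1 Hd2 Hdo)).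
Qed.

Lemma Kinj p a b : Dom p a -> Dom p b -> key p a = key p b -> a = b.
Proof.
move=> Da Db.
have RW : forall a b x v x' v', a.1 = p -> slook sc a = Some (SRd x v) -> slook sc b = Some (SWr x' v') ->
    key p a = key p b -> False.
  move=> a0 b0 x v x' v' Eq Ha Hb; have [-> R1] := Rk Ha Eq.
  have [i [E [G C]]] := Wk p Hb.
  case: C => [[W ->]|[W ->]].
  + by move/(idx_inj (inO_mk R1) (inO_mk W)).
  + by have := idx_size (inO_mk R1); lia.
case: (dom_cases Da) => [[Eq [x [v Ha]]]|[x [v Ha]]];
case: (dom_cases Db) => [[Eq' [x' [v' Hb]]]|[x' [v' Hb]]].
- have [-> R1] := Rk Ha Eq; have [-> R2] := Rk Hb Eq'.
  move/(idx_inj (inO_mk R1) (inO_mk R2)) => [E].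
  move: Eq Eq' Ha Hb E; clear R1 R2; case: a {Da} => q1 k1; case: b {Db} => q2 k2 /= -> -> Ha Hb E.
  case: (ltngtP k1 k2) => Hc; last by rewrite Hc.
  + by have := mp_mono (HMP p) Hc (get_some Hb); rewrite E ltnn.
  + by have := mp_mono (HMP p) Hc (get_some Ha); rewrite E ltnn.
- by move=> E; case: (RW _ _ _ _ _ _ Eq Ha Hb E).
- by move=> E; case: (RW _ _ _ _ _ _ Eq' Hb Ha (esym E)).
- have [i1 [E1 _]] := Wk p Ha; have [i2 [E2 _]] := Wk p Hb.
  move=> Ek; case: (ltngtP i1 i2) => Hc.
  + by have := Lww Ha Hb E1 E2 Hc; rewrite Ek ltnn.
  + by have := Lww Hb Ha E2 E1 Hc; rewrite Ek ltnn.
  + subst i2; exact: (delB Ha Hb (etrans E1 (esym E2))).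
Qed.


Lemma w_below p r x v w' x' v' : slook sc r = Some (SRd x v) -> r.1 = p ->
  slook sc w' = Some (SWr x' v') -> key p w' < key p r ->
  exists i', key p w' = idx p (p, Deliv, i'.+1) /\ tl (p, Deliv, i'.+1) = Some (WrM x' v').
Proof.
move=> Hr Eq Hw; have [-> R1] := Rk Hr Eq.
have [i [E [G C]]] := Wk p Hw.
case: C => [[W ->]|[W ->]]; first by exists i.
by have := idx_size (inO_mk R1); lia.
Qed.

Lemma Kvalid p r x v : Dom p r -> slook sc r = Some (SRd x v) ->
  (exists w, Dom p w /\ slook sc w = Some (SWr x v) /\ key p w < key p r /\
     forall w' v', Dom p w' -> slook sc w' = Some (SWr x v') -> key p w < key p w' -> key p w' < key p r -> False)
  \/ ((forall w' v', Dom p w' -> slook sc w' = Some (SWr x v') -> key p w' < key p r -> False) /\ v = init x).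
Proof.
move=> Dr Hr.
have Eq : r.1 = p.
  by case: (dom_cases Dr) => [[]|[x' [v' H]]] //; rewrite Hr in H.
have [Ek R1] := Rk Hr Eq.
have Hrin : inO tc p (p, Main, pos p r.2) := inO_mk R1.
case: (proj1 (HS2 p) _ _ _ _ (idxP Hrin) R1) => [[jj [wt [Hjj [Hwt [Hwm Hno]]]]]|[Hno ->]].
- left.
  have Hwin := inS Hwt; have Hth := thr_wm Hwm.
  move: Hwin Hwt Hwm Hno Hth; case: wt => [[q th] e] Hwin Hwt Hwm Hno /= Eth; subst th.
  have Eq' : q = p by case: Hwin.
  subst q.
  have Hwm' : get (tc p Deliv) e = Some (WrM x v) := Hwm.
  have [He [bb [s [l Hd]]]] := dp_wm (HDP p) Hwm'.
  have Hdin : inO tc p (p, Deliv, e.-1) := inO_mk Hd.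
  have Hbb : tl bb = Some (TBcast x v s l) by apply/(HS4 p); exists (p, Deliv, e.-1).
  have [k [Eb [Hk _]]] := bc_src Hbb.
  set w := (s, k).
  have Hw : slook sc w = Some (SWr x v) := Hk.
  have EB : B w = bb by rewrite Eb.
  have Edel : del p (B w) = (p, Deliv, e.-1) by rewrite EB; symmetry; exact: del_uniq Hdin Hd.
  have [i [E [G C]]] := Wk p Hw.
  rewrite Edel in E; case: E => ?; subst i.
  have Ee : e.-1.+1 = e by lia.
  rewrite Ee in C.
  case: C => [[W Kw]|[W _]]; last by rewrite W in Hwm'.
  exists w; split; first by right; exists x, v.
  split=> //; split; first by rewrite Kw Ek (idx_eq Hwt).
  move=> w' v' Dw' Hw' H1 H2.
  have [i' [Kw' W']] := w_below Hr Eq Hw' H2.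
  rewrite Kw' in H1 H2; rewrite Ek in H2; rewrite Kw (idx_eq Hwt) in H1.
  exact: (Hno _ _ _ H1 H2 (idxP (inO_mk W')) W').
- right; split=> // w' v' Dw' Hw' H2.
  have [i' [Kw' W']] := w_below Hr Eq Hw' H2.
  rewrite Kw' Ek in H2.
  exact: (Hno _ _ _ H2 (idxP (inO_mk W')) W').
Qed.

Lemma key_del p w x v (l : 'I_m) : slook sc w = Some (SWr x v) -> blk x = Some l ->
  exists i, del p (B w) = (p, Deliv, i) /\
  forall w2 x2 v2 i2, slook sc w2 = Some (SWr x2 v2) -> blk x2 = Some l -> del p (B w2) = (p, Deliv, i2) ->
   (delBefore tc (S p) l (B w) (B w2) <-> i < i2).
Proof.
move=> Hw Hl; have [i [E [G _]]] := Wk p Hw.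
exists i; split=> // w2 x2 v2 i2 Hw2 Hl2 E2.
have G2 := delpos Hw2 E2.
rewrite Hl in G; rewrite Hl2 in G2.
split.
- move=> [d1 [d2 [y1 [u1 [s1 [y2 [u2 [s2 [D1 [D2 Hbf]]]]]]]]]].
  have [i1 [j1 [_ [Gi Gj]]]] := Hbf.
  have Hd1 := inS Gi; have Hd2 := inS Gj.
  have E1 := del_uniq Hd1 D1; have E2' := del_uniq Hd2 D2.
  rewrite E in E1; rewrite E2 in E2'; subst d1 d2.
  exact: (idx_same Hd1 Hd2 erefl (proj1 (beforeE Hd1 Hd2) Hbf)).
- move=> Hlt; exists (p, Deliv, i), (p, Deliv, i2).
  do 6 eexists; split; first exact: G.
  split; first exact: G2.
  have Hd1 : inO tc p (p, Deliv, i) := inO_mk G.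
  have Hd2 : inO tc p (p, Deliv, i2) := inO_mk G2.
  by apply/(beforeE Hd1 Hd2); apply: idx_prog => //; split.
Qed.

Lemma Kagree (l : 'I_m) p q w1 w2 :
  (exists x v, slook sc w1 = Some (SWr x v) /\ blk x = Some l) ->
  (exists x v, slook sc w2 = Some (SWr x v) /\ blk x = Some l) ->
  (key p w1 < key p w2 <-> key q w1 < key q w2).
Proof.
move=> [x1 [v1 [H1 L1]]] [x2 [v2 [H2 L2]]].
suff K : forall p, key p w1 < key p w2 <-> delBefore tc (S p) l (B w1) (B w2).
  by rewrite (K p) (K q); apply: HS5.
move=> p0.
have [i1 [E1 K1]] := key_del p0 H1 L1.
have [i2 [E2 K2]] := key_del p0 H2 L2.
rewrite (K1 _ _ _ _ H2 L2 E2); exact: (w_lt H1 H2 E1 E2).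
Qed.


Definition isWrB (a : SId Proc) : bool := if slook sc a is Some (SWr _ _) then true else false.
Definition allS : seq (SId Proc) := [seq (q, k) | q <- enum Proc, k <- iota 0 (size (sc q))].
Definition domL p : seq (SId Proc) := undup [seq a <- allS | (a.1 == p) || isWrB a].
Definition Sp p : seq (SId Proc) := sort (fun a b => key p a <= key p b) (domL p).

Lemma domL_mem p a : (a \in domL p) <-> Dom p a.
Proof.
rewrite mem_undup mem_filter.
have HallS : (a \in allS) = (a.2 < size (sc a.1)).
  apply/allpairsPdep/idP.
  - by move=> [q [k [_ Hk ->]]]; rewrite mem_iota in Hk.
  - by move=> H; exists a.1, a.2; rewrite mem_enum mem_iota add0n H; case: a {H}.
rewrite HallS; split.
- move=> /andP [/orP [/eqP E|W] Hs].
  + left; split=> //; have [o Ho] := get_exists Hs; by exists o.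
  + right; move: W; rewrite /isWrB /isWrite; case: (slook sc a) => [[x v|x v]|] // _; by exists x, v.
- case=> [[E [o Ho]]|[x [v Ho]]].
  + by apply/andP; split; [rewrite E eqxx|exact: get_some Ho].
  + by apply/andP; split; [rewrite /isWrB Ho orbT|exact: get_some Ho].
Qed.

Lemma Sp_props p : uniq (Sp p) /\ (forall a, (a \in Sp p) <-> Dom p a) /\
  (forall a b, Dom p a -> Dom p b -> (before (Sp p) a b <-> key p a < key p b)).
Proof.
have Hu : uniq (domL p) by apply: undup_uniq.
have Hinj : {in domL p &, injective (key p)}.
  by move=> a b /domL_mem Ha /domL_mem Hb; apply: Kinj.
have [U [M Bf]] := sort_key Hu Hinj.
split=> //; split; first by move=> a; rewrite /Sp M; apply: domL_mem.
by move=> a b /domL_mem Ha /domL_mem Hb; apply: Bf.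
Qed.

Lemma PC_holds : PC sc blk init.
Proof.
exists Sp; split.
- move=> p; have [U [M Bf]] := Sp_props p.
  have getD : forall i a, get (Sp p) i = Some a -> Dom p a by move=> i a /get_mem /M.
  split; [split|split].
  + by move=> i j a; apply: get_uniq.
  + move=> a; split; first by move/M/mem_get.
    by move=> [i /getD].
  + move=> k r l v Hr Hrd.
    have Dr := getD _ _ Hr.
    case: (Kvalid Dr Hrd) => [[w [Dw [Hw [Hlt Hno]]]]|[Hno ->]].
    * left; have [i [j [Hij [Gi Gj]]]] : before (Sp p) w r by apply/Bf.
      rewrite (get_uniq U Gj Hr) in Hij.
      exists i, w; split=> //; split=> //; split=> // j' w' v' H1 H2 Gw' Hw'.
      have Dw' := getD _ _ Gw'.
      apply: (Hno w' v' Dw' Hw').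
      -- by apply/(Bf _ _ Dw Dw'); apply/(posE U Gi Gw').
      -- by apply/(Bf _ _ Dw' Dr); apply/(posE U Gw' Hr).
    * right; split=> // j w v' Hj Gw Hw.
      have Dw := getD _ _ Gw.
      apply: (Hno w v' Dw Hw).
      by apply/(Bf _ _ Dw Dr); apply/(posE U Gw Hr).
  + move=> a b Da Db Hab; apply/(Bf _ _ Da Db); exact: Kprog.
- move=> l p q w1 w2 H1 H2.
  have Dw : forall p0 w, (exists x v, slook sc w = Some (SWr x v) /\ blk x = Some l) -> Dom p0 w.
    by move=> p0 w [x [v [H _]]]; right; exists x, v.
  have [_ [_ Bp]] := Sp_props p; have [_ [_ Bq]] := Sp_props q.
  rewrite (Bp _ _ (Dw p _ H1) (Dw p _ H2)) (Bq _ _ (Dw q _ H1) (Dw q _ H2)).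
  exact: Kagree H1 H2.
Qed.

End Proof.


Theorem mainTheorem1 (Var Val : Type) (Proc : finType) (m : nat)
    (blk : Var -> option 'I_m)
    (Hpart : forall i : 'I_m, exists x, blk x = Some i)
    (init : Var -> Val) (prog : Proc -> seq (SInv Var Val))
    (tau : Variant)
    (tc : Proc -> Thr -> seq (TOp Var Val Proc m))
    (sc : Proc -> seq (SOp Var Val)) :
  (forall p, MainRun (Subroutine tau blk p) (prog p) (tc p Main) (sc p)) ->
  (forall p, DelivRun p (tc p Deliv)) ->
  POB tc init ->
  PC sc blk init.
Proof.
move=> HM HD [S [HS HS5]].
pose pos := fun q => epsilon (inhabits (fun _ : nat => 0)) (MainP blk tau q (tc q Main) (sc q)).
have HMP : forall q, MainP blk tau q (tc q Main) (sc q) (pos q).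
  by move=> q; apply: epsilon_spec; apply: main_ok (HM q).
have HDP : forall q, DelP q (tc q Deliv) by move=> q; apply: deliv_ok (HD q).
apply: (@PC_holds Var Val Proc m blk init tau tc sc pos HMP HDP S).
- by move=> p; case: (HS p).
- by move=> p; case: (HS p) => _ [].
- by move=> p; case: (HS p) => _ [_ []].
- by move=> p; case: (HS p) => _ [_ [_ H]].
- exact: HS5.
Qed.
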